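(* Let $G_1, G_2$ be two graphs on the same vertex set $V$. Let $A \subseteq S(G_1) \cap S(G_2)$ and $B\subseteq V$ be such that $N_{G_1}(B) \cup N_{G_2}(B) \subseteq A$. Suppose $E(G_1) \triangle E(G_2) \subseteq \binom{A \cup B}{2}$. Then \[ S(G_1) \setminus B = S(G_2)\setminus B,\quad P(G_1) \setminus B = P(G_2) \setminus B,\quad R(G_1) \setminus B = R(G_2) \setminus B. \] Moreover, for any vertex $w \in V \setminus B$, we have $C_w(G_1) = C_w(G_2) \subseteq V \setminus (A \cup B)$, $G_1[C_w(G_1)] = G_2[C_w(G_2)]$, and $R(G_1) \cap C_w(G_1) = R(G_2) \cap C_w(G_2)$.
   Context: For a graph $G$ and $X\subseteq V(G)$, $N_G(X)=\{x\in V(G)\setminus X: xy\in E(G)\text{ for some }y\in X\}$ and $N_G(x)=N_G(\{x\})$. The strong $4$-core $S(G)$ is the maximal $X\subseteq V(G)$ with $|N_G(x)\cap X|\ge4$ for all $x\in X\cup N_G(X)$; $P(G)=N_G(S(G))$ and $R(G)=V(G)\setminus(S(G)\cup P(G))$. For $w\in P(G)\cup R(G)$, $C_w(G)$ is the vertex set of the connected component of $G[P(G)\cup R(G)]$ containing $w$; for $w\in S(G)$, $C_w(G)=\varnothing$. $\triangle$ denotes symmetric difference. *)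

(* Defs.v *)
From mathcomp Require Import all_boot.
Set Implicit Arguments. Unset Strict Implicit. Unset Printing Implicit Defensive.

(* A (simple) graph on the finite vertex set T is given by its adjacency
   relation e : rel T (assumed symmetric and irreflexive in the theorem). *)
Section Core.
Variables (T : finType) (e : rel T).

Definition nbhd (X : {set T}) : {set T} :=
  [set x | (x \notin X) && [exists y in X, e x y]].

Definition strong4 (X : {set T}) : bool :=
  [forall x in X :|: nbhd X, 4 <= #|nbhd [set x] :&: X|].

(* S(G): the maximal such X. The family of such sets contains set0 and is
   closed under union, so the maximal set is the union of all of them. *)
Definition score : {set T} := \bigcup_(X : {set T} | strong4 X) X.
Definition pset : {set T} := nbhd score.
Definition rset : {set T} := ~: (score :|: pset).

Definition restr_rel : rel T :=
  [rel x y | [&& e x y, x \in pset :|: rset & y \in pset :|: rset]].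

Definition compw (w : T) : {set T} :=
  if w \in pset :|: rset then [set v | connect restr_rel w v] else set0.
End Core.

(* Main.v *)
Require Import Defs.
From mathcomp Require Import all_boot.
Set Implicit Arguments. Unset Strict Implicit.

Lemma inN (T : finType) (e : rel T) X x :
  (x \in nbhd e X) = (x \notin X) && [exists y in X, e x y].
Proof. by rewrite inE. Qed.

Lemma sub_score (T : finType) (e : rel T) Y : strong4 e Y -> Y \subset score e.
Proof. by move=> h; apply: (bigcup_sup Y h). Qed.

Lemma score_ge4 (T : finType) (e : rel T) x :
  x \in score e :|: nbhd e (score e) -> 4 <= #|nbhd e [set x] :&: score e|.
Proof.
have key : forall X, strong4 e X -> x \in X :|: nbhd e X ->
    4 <= #|nbhd e [set x] :&: score e|.
  move=> X hX hx; move/forallP: (hX) => /(_ x) /implyP /(_ hx) h4.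
  apply: (leq_trans h4); apply: subset_leq_card; apply: setIS.
  exact: sub_score.
case/setUP => [/bigcupP [X hX xX]|].
  by apply: (key X hX); rewrite inE xX.
rewrite inN => /andP [xS /exists_inP [y /bigcupP [X hX yX] exy]].
apply: (key X hX); apply/setUP; right; rewrite inN; apply/andP; split.
  by apply: contra xS => xX; apply/bigcupP; exists X.
by apply/exists_inP; exists y.
Qed.

Lemma nbhd1 (T : finType) (e : rel T) x z :
  (z \in nbhd e [set x]) = (z != x) && e z x.
Proof.
rewrite inN in_set1; congr (_ && _); apply/exists_inP/idP => [[y /set1P -> //]|h].
by exists x; rewrite ?in_set1.
Qed.

Lemma PR (T : finType) (e : rel T) x :
  (x \in pset e :|: rset e) = (x \notin score e).
Proof.
rewrite /rset /pset !inE; case: (x \in score e) => //=.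
by case: [exists y in _, _].
Qed.

Lemma score_half (T : finType) (e1 e2 : rel T)
  (sym1 : symmetric e1) (sym2 : symmetric e2) (A B : {set T})
  (hA : A \subset score e2)
  (hB1 : nbhd e1 B \subset A) (hB2 : nbhd e2 B \subset A)
  (hE : forall x y, x \notin A :|: B -> e1 x y = e2 x y) :
  score e1 :\: B \subset score e2.
Proof.
set S1 := score e1; set S2 := score e2.
set Y := (S1 :\: B) :|: S2.
suff: Y \subset S2 by apply: subset_trans; apply: subsetUl.
apply: sub_score; apply/forallP => x; apply/implyP => hx.
case: (boolP (x \in S2 :|: nbhd e2 S2)) => h2.
  apply: (leq_trans (score_ge4 h2)); apply: subset_leq_card.
  by apply: setIS; apply: subsetUr.
move: h2; rewrite in_setU negb_or => /andP [xS2 xN2].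
have xA : x \notin A by apply: contra xS2 => /(subsetP hA).
have yS2 : forall y, y \in Y -> e2 x y -> y \in S1 :\: B.
  move=> y; case/setUP => // yS2 exy; case/negP: xN2.
  by rewrite inN xS2 /=; apply/exists_inP; exists y.
have xB : x \notin B.
  apply/negP => xB; move: hx.
  rewrite {1}/Y !in_setU in_setD xB (negbTE xS2) /=.
  rewrite inN => /andP [_ /exists_inP [y yY exy]].
  move: (yS2 y yY exy); rewrite inE => /andP [yB yS1].
  have : y \in A.
    apply: (subsetP hB2); rewrite inN yB /=; apply/exists_inP; exists x => //.
    by rewrite sym2.
  by move/(subsetP hA) => yS; case/negP: xN2; rewrite inN xS2; apply/exists_inP; exists y.
have xAB : x \notin A :|: B by rewrite in_setU negb_or xA xB.
have hx1 : x \in S1 :|: nbhd e1 S1.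
  move: hx; rewrite {1}/Y !in_setU in_setD (negbTE xS2) orbF.
  case/orP; first by move=> /andP [_ ->].
  rewrite inN => /andP [xY /exists_inP [y yY exy]].
  move: (yS2 y yY exy); rewrite inE => /andP [yB yS1].
  case: (boolP (x \in S1)) => xS1; first by rewrite inE xS1.
  by rewrite /= inN xS1 /=; apply/exists_inP; exists y => //; rewrite hE.
apply: (leq_trans (score_ge4 hx1)); apply: subset_leq_card.
apply/subsetP => z; rewrite inE nbhd1 => /andP [/andP [zx ezx] zS1].
rewrite inE nbhd1 zx /= sym2 -hE // sym1 ezx /= inE; apply/orP; left.
rewrite inE zS1 andbT; apply/negP => zB; case/negP: xA.
apply: (subsetP hB1); rewrite inN xB /=; apply/exists_inP; exists z => //.
by rewrite sym1.
Qed.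

Lemma pset_half (T : finType) (e1 e2 : rel T) (A B : {set T})
  (hA : A \subset score e1)
  (hB1 : nbhd e1 B \subset A)
  (hE : forall x y, x \notin A :|: B -> e1 x y = e2 x y)
  (hS : forall x, x \notin B -> (x \in score e1) = (x \in score e2)) x :
  x \notin B -> x \in pset e1 -> x \in pset e2.
Proof.
move=> xB; rewrite /pset !inN => /andP [xS1 /exists_inP [y yS1 exy]].
have xA : x \notin A by apply: contra xS1 => /(subsetP hA).
have yB : y \notin B.
  apply/negP => yB; case/negP: xA; apply: (subsetP hB1).
  by rewrite inN xB; apply/exists_inP; exists y.
rewrite -hS // xS1 /=; apply/exists_inP; exists y; first by rewrite -hS.
by rewrite -hE // in_setU negb_or xA.
Qed.

Lemma step (T : finType) (e1 e2 : rel T) (A B : {set T})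
  (hA : A \subset score e1)
  (hB1 : nbhd e1 B \subset A)
  (hE : forall x y, x \notin A :|: B -> e1 x y = e2 x y)
  (hS : forall x, x \notin B -> (x \in score e1) = (x \in score e2)) u v :
  u \notin A :|: B :|: score e1 -> restr_rel e1 u v ->
  v \notin A :|: B :|: score e1 /\ restr_rel e2 u v.
Proof.
rewrite !in_setU !negb_or => /andP [/andP [uA uB] uS].
rewrite /restr_rel /= !PR => /and3P [euv _ vS].
have vA : v \notin A by apply: contra vS => /(subsetP hA).
have vB : v \notin B.
  apply/negP => vB; case/negP: uA; apply: (subsetP hB1).
  by rewrite inN uB; apply/exists_inP; exists v.
split; first by rewrite vA vB vS.
have uAB : u \notin A :|: B by rewrite in_setU negb_or uA.
rewrite /restr_rel /= -hE // euv -(hS _ uB) -(hS _ vB).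
by rewrite uS vS.
Qed.

Lemma conn (T : finType) (e1 e2 : rel T) (A B : {set T})
  (hA : A \subset score e1)
  (hB1 : nbhd e1 B \subset A)
  (hE : forall x y, x \notin A :|: B -> e1 x y = e2 x y)
  (hS : forall x, x \notin B -> (x \in score e1) = (x \in score e2)) u v :
  u \notin A :|: B :|: score e1 -> connect (restr_rel e1) u v ->
  v \notin A :|: B :|: score e1 /\ connect (restr_rel e2) u v.
Proof.
move=> hu /connectP [p hp ->] {v}.
elim: p u hu hp => [|a p IH] u hu /=; first by split.
case/andP => hua hp.
have [ha hua2] := step hA hB1 hE hS hu hua.
have [h1 h2] := IH a ha hp; split => //.
exact: connect_trans (connect1 hua2) h2.
Qed.

Theorem lemma4p5 (T : finType) (e1 e2 : rel T)
  (sym1 : symmetric e1) (irr1 : irreflexive e1)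
  (sym2 : symmetric e2) (irr2 : irreflexive e2)
  (A B : {set T})
  (hA : A \subset score e1 :&: score e2)
  (hB : nbhd e1 B :|: nbhd e2 B \subset A)
  (hE : forall x y, e1 x y != e2 x y -> (x \in A :|: B) && (y \in A :|: B)) :
  [/\ score e1 :\: B = score e2 :\: B,
      pset e1 :\: B = pset e2 :\: B,
      rset e1 :\: B = rset e2 :\: B &
      forall w, w \notin B ->
        [/\ compw e1 w = compw e2 w,
            compw e1 w \subset ~: (A :|: B),
            (forall x y, x \in compw e1 w -> y \in compw e1 w -> e1 x y = e2 x y) &
            rset e1 :&: compw e1 w = rset e2 :&: compw e2 w]].
Proof.
have hE' : forall x y, x \notin A :|: B -> e1 x y = e2 x y.
  move=> x y hx; case: (e1 x y =P e2 x y) => // /eqP /hE /andP [h _].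
  by rewrite h in hx.
have hE2 : forall x y, x \notin A :|: B -> e2 x y = e1 x y.
  by move=> x y hx; rewrite hE'.
have hA1 : A \subset score e1 by apply: subset_trans hA (subsetIl _ _).
have hA2 : A \subset score e2 by apply: subset_trans hA (subsetIr _ _).
have hB1 : nbhd e1 B \subset A by apply: subset_trans hB; apply: subsetUl.
have hB2 : nbhd e2 B \subset A by apply: subset_trans hB; apply: subsetUr.
have hs12 := score_half sym1 sym2 hA2 hB1 hB2 hE'.
have hs21 := score_half sym2 sym1 hA1 hB2 hB1 hE2.
have hS : forall x, x \notin B -> (x \in score e1) = (x \in score e2).
  move=> x xB; apply/idP/idP => h.
    by apply: (subsetP hs12); rewrite inE xB h.
  by apply: (subsetP hs21); rewrite inE xB h.
have hS' : forall x, x \notin B -> (x \in score e2) = (x \in score e1).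
  by move=> x xB; rewrite hS.
have hP : forall x, x \notin B -> (x \in pset e1) = (x \in pset e2).
  move=> x xB; apply/idP/idP.
    exact: (pset_half hA1 hB1 hE' hS xB).
  exact: (pset_half hA2 hB2 hE2 hS' xB).
have hR : forall x, x \notin B -> (x \in rset e1) = (x \in rset e2).
  by move=> x xB; rewrite /rset !in_setC !in_setU hS // hP.
split.
- apply/setP => x; rewrite !in_setD; case xB: (x \in B) => //=.
  by apply: hS; rewrite xB.
- apply/setP => x; rewrite !in_setD; case xB: (x \in B) => //=.
  by apply: hP; rewrite xB.
- apply/setP => x; rewrite !in_setD; case xB: (x \in B) => //=.
  by apply: hR; rewrite xB.
move=> w wB.
have hw1 : w \notin score e1 -> w \notin A :|: B :|: score e1.
  move=> wS; rewrite !in_setU !negb_or wB wS !andbT.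
  by apply: contra wS => /(subsetP hA1).
have hw2 : w \notin score e2 -> w \notin A :|: B :|: score e2.
  move=> wS; rewrite !in_setU !negb_or wB wS !andbT.
  by apply: contra wS => /(subsetP hA2).
have hC : compw e1 w = compw e2 w.
  rewrite /compw !PR -hS //; case: ifP => // wS.
  apply/setP => v; rewrite !inE; apply/idP/idP => h.
    exact: (conn hA1 hB1 hE' hS (hw1 wS) h).2.
  by rewrite hS // in wS; exact: (conn hA2 hB2 hE2 hS' (hw2 wS) h).2.
have hsub : compw e1 w \subset ~: (A :|: B :|: score e1).
  rewrite /compw PR; case: ifP => wS; last by rewrite sub0set.
  apply/subsetP => v; rewrite inE => h; rewrite inE.
  exact: (conn hA1 hB1 hE' hS (hw1 wS) h).1.
split => //.
- by apply: subset_trans hsub _; rewrite setCS // subsetUl.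
- move=> x y hx _; apply: hE'; move: (subsetP hsub x hx).
  by rewrite !inE !negb_or => /andP [/andP [-> ->] _].
rewrite -hC; apply/setP => z; rewrite !in_setI.
case zC: (z \in compw e1 w); rewrite ?andbF ?andbT //.
apply: hR; move: (subsetP hsub z zC).
by rewrite !inE !negb_or => /andP [/andP [_ ->] _].
Qed.
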